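(* Let $K$ be a field, let $\mathcal{H}$ be a complete $s$-uniform $t$-partite hypergraph with $2\leq s\leq t$ on vertex set $\{x_1,\ldots,x_n\}$, $R=K[x_1,\ldots,x_n]$, with sides $V_1,\ldots,V_t$ satisfying $|V_1|\leq|V_2|\leq\cdots\leq|V_t|$. Then: (a) the facets of $\mathrm{Ind}(\mathcal{H})$ are exactly the sets $\bigcup_{j=1}^{s-1}V_{i_j}$ for $1\leq i_1<\cdots<i_{s-1}\leq t$; (b) $\mathrm{Tr}(\mathcal{H})=\{\bigcup_{j=1}^{t-s+1}V_{i_j}: 1\leq i_1<\cdots<i_{t-s+1}\leq t\}$; (c) $i(\mathcal{H})=\sum_{i=t-s+2}^{t}|V_i|$ and $\tau(\mathcal{H})=\sum_{i=1}^{t-s+1}|V_i|$; (d) $\dim(R/I(\mathcal{H}))=\dim(\mathrm{Ind}(\mathcal{H}))+1=\sum_{i=t-s+2}^{t}|V_i|$ and $\mathrm{ht}(I(\mathcal{H}))=\sum_{i=1}^{t-s+1}|V_i|$; (e) if $\mathcal{H}$ is $m$-balanced for some $m\geq 1$, then $\mathrm{ht}(I(\mathcal{H}))=m(t-s+1)$ and $\dim(R/I(\mathcal{H}))=m(s-1)$.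
   Context: A complete $s$-uniform $t$-partite hypergraph has vertex set partitioned into nonempty sides $V_1,\ldots,V_t$, and its edges are exactly all $s$-element vertex subsets consisting of one vertex from each of $s$ distinct sides; it is $m$-balanced if $|V_i|=m$ for all $i$. The edge ideal is $I(\mathcal{H})=(\prod_{x\in e}x: e\in\mathcal{H})$. An independent set is a vertex set containing no edge; $\mathrm{Ind}(\mathcal{H})$ is the simplicial complex of independent sets, and $i(\mathcal{H})$ is the maximum size of an independent set. A transversal is a vertex set meeting every edge; $\mathrm{Tr}(\mathcal{H})$ is the set of inclusion-minimal transversals, and $\tau(\mathcal{H})$ is the minimum size of a transversal. *)

(* Defs.v *)
From HB Require Import structures.
From mathcomp Require Import all_boot all_order all_algebra.
From mathcomp Require Import mpoly.
Set Implicit Arguments. Unset Strict Implicit. Unset Printing Implicit Defensive.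
Import GRing.Theory.

(* Vertices x_1..x_n are 'I_n; the side of each vertex is given by
   side : 'I_n -> 'I_t (sides indexed 0..t-1 instead of 1..t). *)

Section Hyper.
Variables (n t s : nat) (side : 'I_n -> 'I_t).

Definition Vside (i : 'I_t) : {set 'I_n} := [set x | side x == i].

Definition cHyp : {set {set 'I_n}} :=
  [set e : {set 'I_n} | (#|e| == s) && [forall x in e, forall y in e, (side x == side y) ==> (x == y)]].

Definition union_sides (S : {set 'I_t}) : {set 'I_n} := [set x | side x \in S].
End Hyper.

Section HypGen.
Variable (n : nat) (H : {set {set 'I_n}}).

Definition independent (A : {set 'I_n}) : bool := [forall e in H, ~~ (e \subset A)].
Definition transversal (T : {set 'I_n}) : bool := [forall e in H, e :&: T != set0].

Definition facet_Ind (F : {set 'I_n}) : bool := maxset independent F.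
Definition min_transversal (T : {set 'I_n}) : bool := minset transversal T.

Definition indep_num : nat := \max_(A : {set 'I_n} | independent A) #|A|.
Definition transv_num : nat := \big[minn/n]_(T : {set 'I_n} | transversal T) #|T|.

Definition dim_Ind : int := (indep_num%:Z - 1)%R.
End HypGen.

Section Alg.
Variables (K : fieldType) (n : nat).
Local Notation R := {mpoly K[n]}.
Local Open Scope ring_scope.

Definition is_ideal (P : R -> Prop) : Prop :=
  P 0 /\ (forall x y, P x -> P y -> P (x + y)) /\ (forall a x, P x -> P (a * x)).

Definition is_prime_ideal (P : R -> Prop) : Prop :=
  is_ideal P /\ ~ P 1 /\ (forall x y, P (x * y) -> P x \/ P y).

Definition subI (P Q : R -> Prop) : Prop := forall x, P x -> Q x.
Definition ssubI (P Q : R -> Prop) : Prop := subI P Q /\ ~ subI Q P.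

Definition prime_chain (P : nat -> R -> Prop) (d : nat) : Prop :=
  (forall i, (i <= d)%N -> is_prime_ideal (P i)) /\
  (forall i, (i < d)%N -> ssubI (P i) (P i.+1)).

(* Krull dimension of R/I equals d (primes of R/I <-> primes of R containing I) *)
Definition krull_dim_quot (I : R -> Prop) (d : nat) : Prop :=
  (exists P, prime_chain P d /\ subI I (P 0%N)) /\
  (forall P k, prime_chain P k -> subI I (P 0%N) -> (k <= d)%N).

Definition prime_height (P : R -> Prop) (h : nat) : Prop :=
  (exists Q, prime_chain Q h /\ (forall x, Q h x <-> P x)) /\
  (forall Q k, prime_chain Q k -> (forall x, Q k x <-> P x) -> (k <= h)%N).

Definition ideal_height (I : R -> Prop) (h : nat) : Prop :=
  (exists P, is_prime_ideal P /\ subI I P /\ prime_height P h) /\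
  (forall P h', is_prime_ideal P -> subI I P -> prime_height P h' -> (h <= h')%N).

Definition edge_ideal (H : {set {set 'I_n}}) : R -> Prop :=
  fun p => exists c : {set 'I_n} -> R,
    p = \sum_(e in H) c e * \prod_(i in e) 'X_i.
End Alg.

(* Main.v *)
Require Import Defs.
From HB Require Import structures.
From mathcomp Require Import all_boot all_order all_algebra.
From mathcomp Require Import mpoly.
From Stdlib Require Import Classical ClassicalEpsilon.
From mathcomp Require Import zify.
From Stdlib Require Import Lia.
Set Implicit Arguments. Unset Strict Implicit. Unset Printing Implicit Defensive.
Import GRing.Theory.
Local Notation transversal := Defs.transversal.
Section MP.
Variables (K : fieldType) (n : nat).
Local Notation R := {mpoly K[n]}.
Local Open Scope ring_scope.

Definition lqT (T : {set 'I_n}) : n.-tuple R := [tuple if i \in T then 0 else 'X_i | i < n].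
Definition PT T : R -> Prop := fun p => p \mPo lqT T = 0.

Lemma PT_prime T : is_prime_ideal (PT T).
Proof.
rewrite /PT; split; [split; [|split]|split].
- by rewrite comp_mpoly0.
- by move=> x y hx hy; rewrite comp_mpolyD hx hy addr0.
- by move=> a x hx; rewrite rmorphM /= hx mulr0.
- by rewrite comp_mpoly1; apply/eqP; rewrite oner_eq0.
- by move=> x y; rewrite rmorphM /= => /eqP; rewrite mulf_eq0 => /orP[/eqP|/eqP]; auto.
Qed.

Lemma PT_X T i : PT T 'X_i <-> i \in T.
Proof.
rewrite /PT comp_mpolyXU -tnth_nth tnth_mktuple.
case: (i \in T) => //; split=> // h.
by have := mcoeffXU K i i; rewrite h mcoeff0 eqxx => /esym/eqP; rewrite oner_eq0.
Qed.
End MP.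
Section Ideals.
Variables (K : fieldType) (n : nat).
Local Notation R := {mpoly K[n]}.
Local Open Scope ring_scope.

Lemma ideal_sum (Q : R -> Prop) (I : Type) (r : seq I) (P : pred I) (F : I -> R) :
  is_ideal Q -> (forall i, P i -> Q (F i)) -> Q (\sum_(i <- r | P i) F i).
Proof.
move=> [h0 [hD hM]] hF; elim: r => [|a r IH]; first by rewrite big_nil.
rewrite big_cons; case: (P a) / idP => Pa //; exact: hD (hF a Pa) IH.
Qed.

Lemma ideal_Mr (Q : R -> Prop) a x : is_ideal Q -> Q x -> Q (x * a).
Proof. by move=> [_ [_ hM]] hx; rewrite mulrC; apply: hM. Qed.

Lemma ideal_Z (Q : R -> Prop) (c : K) x : is_ideal Q -> Q x -> Q (c *: x).
Proof. by move=> [_ [_ hM]] hx; rewrite -mul_mpolyC; apply: hM. Qed.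

Lemma ideal_Xm (Q : R -> Prop) (m : 'X_{1..n}) i :
  is_ideal Q -> Q 'X_i -> (0 < m i)%N -> Q 'X_[m].
Proof.
move=> hQ hX hm; rewrite -[X in Q X]comp_mpoly_id comp_mpolyX (bigD1 i) //=.
apply: ideal_Mr => //; rewrite tnth_mktuple; case: (m i) hm => // k _.
rewrite exprS; apply: ideal_Mr=> //.
Qed.

Lemma PT_sub (T : {set 'I_n}) (Q : R -> Prop) : is_ideal Q ->
  (forall i, i \in T -> Q 'X_i) -> subI (PT T) Q.
Proof.
move=> hQ hX p hp.
have e : p = p - (p \mPo (@lqT K n T)) by rewrite hp subr0.
rewrite e {1}(mpolyE p) comp_mpolyEX -sumrB.
apply: ideal_sum => // m _; rewrite -scalerBr; apply: ideal_Z => //.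
case: (boolP [exists i, (i \in T) && (0 < m i)%N]) => [/existsP[i /andP[iT mi]]|].
  rewrite comp_mpolyX (bigD1 i) //= tnth_mktuple iT expr0n.
  rewrite (negbTE (lt0n_neq0 mi)) mul0r subr0.
  exact: (ideal_Xm hQ (hX i iT) mi).
rewrite negb_exists => /forallP hm.
rewrite comp_mpolyX -[X in X - _]comp_mpoly_id comp_mpolyX.
rewrite (eq_bigr (fun i => tnth ((@lqT K n T)) i ^+ m i)); first by rewrite subrr; case: hQ.
move=> i _; rewrite !tnth_mktuple; case: ifP => // iT.
by move: (hm i); rewrite iT /= lt0n negbK => /eqP->; rewrite !expr0.
Qed.
End Ideals.
Section Indep.
Variables (K : fieldType) (n : nat).
Local Notation R := {mpoly K[n]}.
Local Open Scope ring_scope.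

Definition cons_ff D k (a : 'I_D) (b : {ffun 'I_k -> 'I_D}) : {ffun 'I_k.+1 -> 'I_D} :=
  [ffun j => if unlift ord0 j is Some j' then b j' else a].

Lemma sum_ff_split D k (F : {ffun 'I_k.+1 -> 'I_D} -> R) :
  \sum_al F al = \sum_(a : 'I_D) \sum_(b : {ffun 'I_k -> 'I_D}) F (cons_ff a b).
Proof.
rewrite pair_big /=.
rewrite (reindex (fun p : 'I_D * {ffun 'I_k -> 'I_D} => cons_ff p.1 p.2)) //=.
exists (fun al : {ffun 'I_k.+1 -> 'I_D} => (al ord0, [ffun j => al (lift ord0 j)])).
  move=> [a b] _ /=; rewrite /cons_ff ffunE unlift_none; congr pair.
  by apply/ffunP=> j; rewrite !ffunE liftK.
move=> al _ /=; apply/ffunP=> j; rewrite /cons_ff ffunE.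
by case: (unliftP ord0 j) => [j' ->|->]; rewrite ?ffunE.
Qed.

Definition mono (x : nat -> R) k D (al : {ffun 'I_k -> 'I_D}) : R :=
  \prod_(j < k) x j ^+ al j.

Lemma mono_cons (x : nat -> R) k D (a : 'I_D) (b : {ffun 'I_k -> 'I_D}) :
  mono x (cons_ff a b) = x 0%N ^+ a * mono (fun j => x j.+1) b.
Proof.
rewrite /mono big_ord_recl /cons_ff ffunE unlift_none; congr (_ * _).
by apply: eq_bigr => j _; rewrite ffunE liftK lift0.
Qed.

Lemma prime_pow (P : R -> Prop) x e : is_prime_ideal P -> P (x ^+ e) -> P x.
Proof.
move=> [hI [h1 hM]]; elim: e => [|e IH]; first by rewrite expr0.
by rewrite exprS => /hM [].
Qed.

Lemma ideal_B (Q : R -> Prop) x y : is_ideal Q -> Q x -> Q y -> Q (x - y).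
Proof.
move=> [h0 [hD hM]] hx hy; apply: hD => //.
by rewrite -mulN1r; apply: hM.
Qed.

Lemma indep D : forall k (P : nat -> R -> Prop) (x : nat -> R)
  (v : {ffun 'I_k -> 'I_D} -> K),
  (forall i, (i <= k)%N -> is_prime_ideal (P i)) ->
  (forall i, (i < k)%N -> subI (P i) (P i.+1)) ->
  (forall i, (i < k)%N -> P i.+1 (x i) /\ ~ P i (x i)) ->
  (exists al, v al != 0) ->
  ~ P 0%N (\sum_al v al *: mono x al).
Proof.
elim=> [|k IH] P x v hP hS hx [al hal].
  have e : forall b : {ffun 'I_0 -> 'I_D}, b = al.
    by move=> b; apply/ffunP => -[].
  rewrite (big_pred1 al); last by move=> b; rewrite /= (e b) eqxx.
  rewrite /mono big_ord0 => h.
  have [_ [h1 _]] := hP 0%N isT; apply: h1.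
  have := ideal_Z (v al)^-1 (proj1 (hP 0%N isT)) h.
  by rewrite scalerA mulVf // scale1r.
pose S (a : 'I_D) := \sum_(b : {ffun 'I_k -> 'I_D}) v (cons_ff a b) *: mono (fun j => x j.+1) b.
have eS : \sum_al v al *: mono x al = \sum_(a : 'I_D) x 0%N ^+ a * S a.
  rewrite sum_ff_split; apply: eq_bigr => a _; rewrite /S mulr_sumr.
  by apply: eq_bigr => b _; rewrite mono_cons scalerAr.
pose pr a := [exists b, v (cons_ff a b) != 0].
have pr0 : pr (al ord0).
  apply/existsP; exists [ffun j => al (lift ord0 j)].
  suff -> : cons_ff (al ord0) [ffun j => al (lift ord0 j)] = al by [].
  apply/ffunP=> j; rewrite /cons_ff ffunE.
  by case: (unliftP ord0 j) => [j' ->|->]; rewrite ?ffunE.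
case: (arg_minnP (fun a : 'I_D => (a : nat)) pr0) => a0 pa0 mina0.
have Sz : forall a : 'I_D, (a < a0)%N -> S a = 0.
  move=> a lta; rewrite /S big1 // => b _.
  case: (boolP (v (cons_ff a b) == 0)) => [/eqP->|nz]; first by rewrite scale0r.
  have : pr a by apply/existsP; exists b.
  by move/mina0; rewrite leqNgt lta.
pose W := \sum_(a : 'I_D | (a0 < a)%N) x 0%N ^+ (a - a0.+1) * S a.
have eS2 : \sum_(a : 'I_D) x 0%N ^+ a * S a = x 0%N ^+ a0 * (S a0 + x 0%N * W).
  rewrite (bigID (fun a : 'I_D => (a < a0)%N)) /= big1 ?add0r; last first.
    by move=> a /Sz ->; rewrite mulr0.
  rewrite (bigD1 a0) /=; last by rewrite ltnn.
  rewrite mulrDr; congr (_ + _).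
  rewrite /W mulr_sumr mulr_sumr; apply: eq_big => [a|a /andP[ha hne]].
    by rewrite -leqNgt ltn_neqAle eq_sym andbC.
  rewrite [x 0%N * _]mulrA -exprS mulrA -exprD; congr (_ ^+ _ * _).
  have : (a0 < a)%N by rewrite ltn_neqAle eq_sym hne leqNgt ha.
  by move=> h; rewrite subnSK // subnKC // ltnW.
rewrite eS eS2 => hin.
have [hI0 [h10 hM0]] := hP 0%N isT.
have [hx1 hx0] := hx 0%N isT.
case: (hM0 _ _ hin) => [/(prime_pow (hP 0%N isT)) //|hY].
have hY1 : P 1%N (S a0 + x 0%N * W) by apply: (hS 0%N isT).
have hI1 := proj1 (hP 1%N isT).
have hS1 : P 1%N (S a0).
  have := ideal_B hI1 hY1 (ideal_Mr W hI1 hx1).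
  by rewrite addrK.
have [b0 hb0] := existsP pa0.
apply: (IH (fun i => P i.+1) (fun i => x i.+1) (fun b => v (cons_ff a0 b))) => //.
- by move=> i hi; apply: hP.
- by move=> i hi; apply: hS.
- by move=> i hi; apply: hx.
- by exists b0.
Qed.
End Indep.
Section Dep.
Variables (K : fieldType) (n : nat).
Local Notation R := {mpoly K[n]}.
Local Open Scope ring_scope.

Lemma msizeM_bd (p q : R) a b : (msize p <= a.+1)%N -> (msize q <= b.+1)%N ->
  (msize (p * q) <= (a + b).+1)%N.
Proof.
have [->|nzp] := eqVneq p 0; first by rewrite mul0r msize0.
have [->|nzq] := eqVneq q 0; first by rewrite mulr0 msize0.
rewrite msizeM // => hp hq.
have := leq_add hp hq; rewrite addSn addnS /=.
by case: (msize p + msize q)%N => //= m; rewrite ltnS.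
Qed.

Lemma msize_exp_bd (p : R) b e : (msize p <= b.+1)%N -> (msize (p ^+ e) <= (e * b).+1)%N.
Proof.
move=> hp; elim: e => [|e IH]; first by rewrite expr0 msize1.
by rewrite exprS mulSn; apply: msizeM_bd.
Qed.

Lemma msize_prod_bd k (F : 'I_k -> R) (b : 'I_k -> nat) :
  (forall j, msize (F j) <= (b j).+1)%N ->
  (msize (\prod_(j < k) F j) <= (\sum_(j < k) b j).+1)%N.
Proof.
move=> hF; elim/big_rec2: _ => [|j s p _ hp]; first by rewrite msize1.
by rewrite addnC mulrC; apply: msizeM_bd.
Qed.

Lemma dependent (x : nat -> R) : exists D,
  exists v : {ffun 'I_n.+1 -> 'I_D} -> K,
  (exists al, v al != 0) /\ \sum_al v al *: mono x al = 0.
Proof.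
pose k := n.+1.
pose d := (\max_(j < k) msize (x j))%N.
pose c := (k * d).+1.
pose D := (c ^ n).+1.
pose B := (k * D * d)%N.
pose E := B.+1.
have hmono : forall al : {ffun 'I_k -> 'I_D}, (msize (mono x al) <= B.+1)%N.
  move=> al; apply: (leq_trans (msize_prod_bd (b := fun j => (al j * d)%N) _)).
    move=> j; apply: msize_exp_bd; apply: leq_trans (leqnSn _).
    rewrite /d; exact: (@leq_bigmax _ (fun j : 'I_k => msize (x j)) j).
  rewrite ltnS /B -mulnA -[X in (_ <= X * _)%N]card_ord -sum_nat_const.
  by apply: leq_sum => j _; rewrite leq_mul2r ltnW ?orbT.
pose A := {ffun 'I_k -> 'I_D}.
pose Bx := {ffun 'I_n -> 'I_E}.
pose mn (be : Bx) : 'X_{1..n} := [multinom (be i : nat) | i < n].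
pose M : 'M[K]_(#|A|, #|Bx|) :=
  \matrix_(r, cc) (mono x (enum_val r))@_(mn (enum_val cc)).
have card_lt : (#|Bx| < #|A|)%N.
  rewrite !card_ffun !card_ord /k.
  have hE : (E <= c * D)%N.
    rewrite /E /B /c mulSn -mulnA [(D * d)%N]mulnC mulnA.
    by rewrite -[X in (X < _)%N]add0n ltn_add2r.
  have hexp : forall e a b, (a <= b)%N -> (a ^ e <= b ^ e)%N.
    by move=> e a b hab; elim: e => // e IH; rewrite !expnS leq_mul.
  apply: (leq_ltn_trans (hexp n _ _ hE)).
  by rewrite expnMn expnS ltn_pmul2r ?expn_gt0 // /D.
have hk : kermx M != 0.
  rewrite -mxrank_eq0 mxrank_ker subn_eq0 -ltnNge.
  exact: leq_ltn_trans (rank_leq_col M) card_lt.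
have [i hi] : exists i, row i (kermx M) != 0.
  case: (boolP [exists i, row i (kermx M) != 0]) => [/existsP[i hi]|]; first by exists i.
  rewrite negb_exists => /forallP h; case/negP: hk; apply/eqP/row_matrixP => i.
  by move: (h i); rewrite negbK row0 => /eqP.
pose w := row i (kermx M).
have hw : w *m M = 0 by apply/eqP; rewrite -sub_kermx row_sub.
exists D, (fun al => w 0 (enum_rank al)); split.
  case: (boolP [exists j, w 0 j != 0]) => [/existsP[j hj]|].
    by exists (enum_val j); rewrite enum_valK.
  rewrite negb_exists => /forallP h; case/negP: hi; apply/eqP/rowP => j.
  by move: (h j); rewrite negbK [in RHS]mxE => /eqP.
apply/mpolyP => m; rewrite mcoeff0 raddf_sum /=.
rewrite (eq_bigr (fun al => w 0 (enum_rank al) * (mono x al)@_m)); last first.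
  by move=> al _; rewrite mcoeffZ.
case: (boolP [forall j, (m j < E)%N]) => [/forallP hm|].
  pose be : Bx := [ffun j => inord (m j)].
  have hbe : mn be = m by apply/mnmP => j; rewrite mnmE ffunE inordK.
  have h := congr1 (fun u : 'rV_#|Bx| => u 0 (enum_rank be)) hw.
  rewrite /= !mxE in h; apply: etrans _ h.
  rewrite [RHS](reindex _ (onW_bij _ (@enum_rank_bij A))) /=.
  by apply: eq_bigr => al _; rewrite [M _ _]mxE !enum_rankK hbe.
rewrite negb_forall => /existsP[j]; rewrite -leqNgt => hj.
rewrite big1 // => al _.
rewrite memN_msupp_eq0 ?mulr0 //; apply: msize_mdeg_ge.
apply: leq_trans (hmono al) _; apply: leq_trans hj _.
by rewrite mdegE (bigD1 j) //= leq_addr.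
Qed.
End Dep.
Section Bound.
Variables (K : fieldType) (n : nat).
Local Notation R := {mpoly K[n]}.
Local Open Scope ring_scope.

Lemma chain_bound (P : nat -> R -> Prop) k : prime_chain P k -> (k <= n)%N.
Proof.
move=> [hP hS]; rewrite leqNgt; apply/negP => hk.
have ex : forall i, exists y : R, (i < k)%N -> P i.+1 y /\ ~ P i y.
  move=> i; case: (boolP (i < k)%N) => hi; last by exists 0.
  have [hsub hns] := hS i hi.
  apply: NNPP => hne; apply: hns => y hy; apply: NNPP => hy'.
  by apply: hne; exists y.
pose x i := proj1_sig (constructive_indefinite_description _ (ex i)).
have hx : forall i, (i < k)%N -> P i.+1 (x i) /\ ~ P i (x i).
  by move=> i; exact: (proj2_sig (constructive_indefinite_description _ (ex i))).
have [D [v [hv h0]]] := dependent x.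
apply: (@indep K n D n.+1 P x v) => //.
- by move=> i hi; apply: hP; apply: leq_trans hi hk.
- by move=> i hi; apply: (proj1 (hS i _)); apply: leq_trans hi hk.
- by move=> i hi; apply: hx; apply: leq_trans hi hk.
- by rewrite h0; case: (hP 0%N isT) => -[].
Qed.
End Bound.
Section Chains.
Variables (K : fieldType) (n : nat).
Local Notation R := {mpoly K[n]}.
Local Open Scope ring_scope.
Local Notation PT := (@PT K n).

Lemma PT_mono (T T' : {set 'I_n}) : T \subset T' -> subI (PT T) (PT T').
Proof.
move=> hT; apply: PT_sub; first exact: (proj1 (PT_prime K T')).
by move=> i iT; apply/PT_X; apply: (subsetP hT).
Qed.

Lemma PT_chain (T : {set 'I_n}) (L : seq 'I_n) : uniq L ->
  (forall i, i \in L -> i \notin T) ->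
  prime_chain (fun j => PT (T :|: [set x in take j L])) (size L).
Proof.
move=> hU hT; split; first by move=> i _; apply: PT_prime.
move=> j hj.
have x0 : 'I_n by case: L hU hT hj => [//|y0 *]; exact: y0.
have e := take_nth x0 hj.
split.
  apply: PT_mono; apply/subsetP => y; rewrite !inE e mem_rcons inE.
  by case/orP=> -> //; rewrite !orbT.
move=> h; have := h 'X_(nth x0 L j).
rewrite !PT_X !inE e mem_rcons inE eqxx orbT => /(_ isT) /orP[].
  by apply/negP; apply: hT; apply: mem_nth.
have : uniq (take j.+1 L) by rewrite take_uniq.
by rewrite e rcons_uniq => /andP[/negP].
Qed.

Lemma take_all_set (T : {set 'I_n}) :
  [set x in take (size (enum T)) (enum T)] = T.
Proof. by rewrite take_size set_enum. Qed.

Lemma chain_glue (A B : nat -> R -> Prop) a b :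
  prime_chain A a -> prime_chain B b -> subI (A a) (B 0%N) ->
  exists C c, prime_chain C c /\ (a + b <= c)%N /\
    (forall x, C 0%N x <-> A 0%N x) /\ (forall x, C c x <-> B b x).
Proof.
move=> [hA hA'] [hB hB'] hAB.
case: (classic (subI (B 0%N) (A a))) => hBA.
  exists (fun j => if (j < a)%N then A j else B (j - a)%N), (a + b)%N.
  split; last split => //; last split.
  - split.
      move=> i hi; case: ifP => h; first by apply: hA; apply: ltnW.
      by apply: hB; rewrite leq_subLR.
    move=> i hi; case: (ltngtP i.+1 a) => [h1|h1|h1].
    + by apply: hA'; apply: ltnW.
    + rewrite subSn //; apply: hB'; rewrite ltn_subLR //.
    + rewrite h1 subnn; split.
        move=> x hx; apply: hAB; rewrite -h1; apply: (proj1 (hA' i _)) => //.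
        by rewrite h1.
      move=> hsub; apply: (proj2 (hA' i _)); first by rewrite h1.
      by move=> x hx; apply: hsub; apply: hAB; rewrite -h1.
  - case: (posnP a) => [ha|ha] x /=; last by [].
    subst a; rewrite ?subn0; split; first by move=> /hBA.
    by move=> hx; apply: hAB.
  - by move=> x; rewrite ltnNge leq_addr /= addKn.
exists (fun j => if (j <= a)%N then A j else B (j - a.+1)%N), (a + b).+1.
split; last split; last split.
- split.
    move=> i hi; case: ifP => h; first by apply: hA.
    by apply: hB; rewrite leq_subLR addSn.
  move=> i hi; case: (ltngtP i a) => h1.
  + by apply: hA'.
  + rewrite subSS -(subnSK h1); apply: hB'.
    by rewrite ltn_subLR // addSn.
  + by rewrite h1 subSS subnn; split => // hsub; apply: hBA.
- exact: leqnSn.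
- by [].
- by move=> x; rewrite ltnNge leq_addr /= subSS addKn.
Qed.
End Chains.
Section Main.
Variables (K : fieldType) (n : nat) (H : {set {set 'I_n}}).
Local Notation R := {mpoly K[n]}.
Local Open Scope ring_scope.
Local Notation PT := (@PT K n).
Local Notation I := (@edge_ideal K n H).

Lemma edge_in_PT T : transversal H T -> subI I (PT T).
Proof.
move=> /forall_inP hT p [c ->].
have hI := proj1 (PT_prime K T).
apply: ideal_sum => // e eH; case: hI => [_ [_ hM]]; apply: hM.
have /set0Pn [i] := hT e eH; rewrite inE => /andP[ie iT].
rewrite (bigD1 i) //=; apply: ideal_Mr; first exact: (proj1 (PT_prime K T)).
by apply/PT_X.
Qed.

Lemma prime_Xprod (P : R -> Prop) (e : {set 'I_n}) : is_prime_ideal P ->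
  P (\prod_(i in e) 'X_i) -> exists2 i, i \in e & P 'X_i.
Proof.
move=> [hI [h1 hM]]; elim/big_rec: _ => [//|i x ie IH /hM [hx|hx]].
  by exists i.
exact: IH.
Qed.

Lemma edge_mem e : e \in H -> I (\prod_(i in e) 'X_i).
Proof.
move=> eH; exists (fun e' => if e' == e then 1 else 0).
rewrite (bigD1 e) //= eqxx mul1r.
rewrite [X in _ = _ + X]big1 ?addr0 // => e' /andP[_ /negbTE ->].
by rewrite mul0r.
Qed.

Definition TP (P : R -> Prop) : {set 'I_n} :=
  [set i | if excluded_middle_informative (P 'X_i) then true else false].

Lemma inTP P i : i \in TP P <-> P 'X_i.
Proof.
by rewrite inE; case: excluded_middle_informative.
Qed.

Lemma TP_trans P : is_prime_ideal P -> subI I P -> transversal H (TP P).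
Proof.
move=> hP hIP; apply/forall_inP => e eH.
have [i ie hi] := prime_Xprod hP (hIP _ (edge_mem eH)).
by apply/set0Pn; exists i; rewrite inE ie; apply/inTP.
Qed.

Lemma PT_TP P : is_prime_ideal P -> subI (PT (TP P)) P.
Proof. by move=> hP; apply: PT_sub; [exact: proj1 hP | move=> i /inTP]. Qed.

Definition chain0 (T : {set 'I_n}) := fun j => PT (set0 :|: [set x in take j (enum T)]).
Definition chainUp (T : {set 'I_n}) := fun j => PT (T :|: [set x in take j (enum (~: T))]).

Lemma chain0_ok T : prime_chain (chain0 T) #|T|.
Proof.
rewrite cardE; apply: PT_chain; first exact: enum_uniq.
by move=> i; rewrite inE.
Qed.

Lemma chain0_end T x : chain0 T #|T| x <-> PT T x.
Proof. by rewrite /chain0 set0U cardE take_all_set. Qed.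

Lemma chainUp_ok T : prime_chain (chainUp T) (n - #|T|).
Proof.
have -> : (n - #|T|)%N = size (enum (~: T)).
  by rewrite -cardE; have := cardsC T; rewrite card_ord => e; rewrite -[X in (X - _)%N]e addKn.
apply: PT_chain; first exact: enum_uniq.
by move=> i; rewrite mem_enum inE.
Qed.

Lemma chainUp_start T : subI (PT T) (chainUp T 0%N).
Proof. by apply: PT_mono; apply: subsetUl. Qed.

Lemma alg_main tau : (exists T0, transversal H T0 /\ #|T0| = tau) ->
  (forall T, transversal H T -> (tau <= #|T|)%N) ->
  krull_dim_quot I (n - tau) /\ ideal_height I tau.
Proof.
move=> [T0 [hT0 hc0]] hmin.
have tau_le : (tau <= n)%N by rewrite -hc0 -[X in (_ <= X)%N]card_ord max_card.
split; split.
- exists (chainUp T0); split; first by rewrite -hc0; apply: chainUp_ok.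
  by move=> x /(edge_in_PT hT0) /chainUp_start.
- move=> P k hch hI0.
  have hP0 : is_prime_ideal (P 0%N) by apply: (proj1 hch).
  pose T := TP (P 0%N).
  have hT := hmin _ (TP_trans hP0 hI0).
  have [C [c [hC [hc _]]]] := chain_glue (chain0_ok T) hch
    (fun x hx => PT_TP hP0 (proj1 (chain0_end T x) hx)).
  have := chain_bound hC => hcn.
  rewrite leq_subRL // addnC; apply: leq_trans hcn.
  by apply: leq_trans hc; rewrite addnC leq_add2r.
- exists (PT T0); split; first exact: PT_prime.
  split; first exact: edge_in_PT.
  split.
    exists (chain0 T0); split; first by rewrite -hc0; apply: chain0_ok.
    by move=> x; rewrite -hc0; apply: chain0_end.
  move=> Q k hQ hQe.
  have [C [c [hC [hc _]]]] := chain_glue hQ (chainUp_ok T0)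
    (fun x hx => chainUp_start (proj1 (hQe x) hx)).
  have := leq_trans hc (chain_bound hC).
  by rewrite hc0 => h; lia.
- move=> P h' hP hIP hh.
  pose T := TP P.
  have hT := hmin _ (TP_trans hP hIP).
  have hB : prime_chain (fun _ : nat => P) 0 by split => // i; rewrite ltn0.
  have [C [c [hC [hc [_ hCe]]]]] := chain_glue (chain0_ok T) hB
    (fun x hx => PT_TP hP (proj1 (chain0_end T x) hx)).
  apply: leq_trans hT _; rewrite addn0 in hc; apply: leq_trans hc _.
  exact: (proj2 hh) C c hC hCe.
Qed.
End Main.
Section Count.
Variable t : nat.

Lemma card_top k : (k <= t)%N -> #|[set i : 'I_t | (t - k <= i)%N]| = k.
Proof.
move=> hk; rewrite -sum1_card.
rewrite (eq_bigl (fun i : 'I_t => (t - k <= i)%N)); last by move=> i; rewrite inE.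
rewrite -(big_mkord (fun i => (t - k <= i)%N) (fun _ => 1%N)).
rewrite (@big_cat_nat _ _ _ (t - k) 0 t _ _ (leq0n _) (leq_subr k t)) /=.
rewrite big_nat_cond big_pred0 ?add0n; last first.
  by move=> i; apply/negbTE/negP => /andP[/andP[_ h1] h2]; move: h1; rewrite ltnNge h2.
rewrite big_nat_cond (eq_bigl (fun i => (t - k <= i < t)%N && true)); last first.
  by move=> i; case: (t - k <= i)%N; rewrite ?andbT ?andbF.
by rewrite -big_nat_cond sum_nat_const_nat muln1 subKn.
Qed.

Lemma top_max (w : 'I_t -> nat) k (S : {set 'I_t}) :
  (forall i j : 'I_t, (i <= j)%N -> (w i <= w j)%N) -> #|S| = k -> (k <= t)%N ->
  (\sum_(i in S) w i <= \sum_(i < t | (t - k <= i)%N) w i)%N.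
Proof.
move=> hw hS hk.
pose Top := [set i : 'I_t | (t - k <= i)%N].
rewrite [X in (_ <= X)%N](eq_bigl (mem Top)); last by move=> i; rewrite -[mem Top i]/(i \in Top) /Top inE.
rewrite (bigID (mem Top)) [X in (_ <= X)%N](bigID (mem S)) /=.
apply: leq_add.
  by rewrite leq_eqVlt; apply/orP; left; apply/eqP; apply: eq_bigl => i; rewrite andbC.
pose A := S :\: Top; pose B := Top :\: S.
rewrite (eq_bigl (mem A)); last by move=> i; rewrite /A /B !inE andbC.
rewrite [X in (_ <= X)%N](eq_bigl (mem B)); last by move=> i; rewrite /A /B !inE andbC.
have cAB : #|A| = #|B|.
  by rewrite !cardsD setIC hS card_top.
pose M := (\max_(i in A) w i)%N.
apply: (@leq_trans (#|A| * M)).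
  rewrite -sum_nat_const; apply: leq_sum => i iA.
  exact: (@leq_bigmax_cond _ (mem A) w i iA).
rewrite cAB -sum_nat_const; apply: leq_sum => j jB.
apply/bigmax_leqP => i iA; apply: hw.
move: iA jB; rewrite !inE => /andP[iT _] /andP[_ jT].
by apply: ltnW; apply: leq_trans jT; rewrite ltnNge.
Qed.
End Count.
Section Comb.
Variables (n t s : nat) (side : 'I_n -> 'I_t).
Hypothesis Hs : (2 <= s)%N.
Hypothesis Hst : (s <= t)%N.
Hypothesis Hsurj : forall i : 'I_t, exists x : 'I_n, side x = i.
Local Notation H := (cHyp s side).
Local Notation us := (union_sides side).

Lemma indepP A : independent H A = (#|side @: A| < s)%N.
Proof.
apply/idP/idP.
  move=> hA; rewrite ltnNge; apply/negP => hge.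
  have [x0 _] : exists x0, x0 \in A.
    have : (0 < #|side @: A|)%N by apply: leq_trans hge; apply: leq_trans Hs.
    rewrite card_gt0 => /set0Pn [i /imsetP [x xA _]]; by exists x.
  pose l := take s (enum (side @: A)).
  pose S := [set i in l].
  have hS : #|S| = s.
    rewrite cardsE; have /card_uniqP -> : uniq l by rewrite take_uniq ?enum_uniq.
    by rewrite size_takel // -cardE.
  have SA : forall i, i \in S -> i \in side @: A.
    by move=> i; rewrite inE => /mem_take; rewrite mem_enum.
  pose r i := odflt x0 [pick x in A | side x == i].
  have hr : forall i, i \in S -> r i \in A /\ side (r i) = i.
    move=> i /SA /imsetP [y yA ->]; rewrite /r.
    case: pickP => [z /andP[zA /eqP ->]|/(_ y)] //=.
    by rewrite yA eqxx.
  pose e := r @: S.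
  have eA : e \subset A.
    by apply/subsetP => y /imsetP [i iS ->]; case: (hr i iS).
  have eH : e \in H.
    rewrite inE; apply/andP; split.
      rewrite card_in_imset ?hS // => i j iS jS hij.
      by rewrite -(proj2 (hr i iS)) -(proj2 (hr j jS)) hij.
    apply/forall_inP => y /imsetP [i iS ->]; apply/forall_inP => z /imsetP [j jS ->].
    by rewrite (proj2 (hr i iS)) (proj2 (hr j jS)); apply/implyP => /eqP ->.
  by move/forall_inP: hA => /(_ e eH); rewrite eA.
move=> hlt; apply/forall_inP => e; rewrite inE => /andP[/eqP he hinj].
apply/negP => eA.
have : #|side @: e| = s.
  rewrite -he; apply/eqP/imset_injP => x y xe ye hxy.
  by move/forall_inP: hinj => /(_ x xe) /forall_inP /(_ y ye) /implyP /(_ (introT eqP hxy)) /eqP.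
move=> hc; move: hlt; rewrite ltnNge; case/negP; rewrite -hc.
by apply: subset_leq_card; apply: imsetS.
Qed.

Lemma side_us S : side @: us S = S.
Proof.
apply/setP => i; apply/imsetP/idP => [[x]|iS]; first by rewrite inE => h ->.
by have [x hx] := Hsurj i; exists x => //; rewrite inE hx.
Qed.

Lemma us_indep S : independent H (us S) = (#|S| < s)%N.
Proof. by rewrite indepP side_us. Qed.

Lemma usC S : us (~: S) = ~: us S.
Proof. by apply/setP => x; rewrite !inE. Qed.

Lemma facetP F : facet_Ind H F <-> exists S : {set 'I_t}, #|S| = (s - 1)%N /\ F = us S.
Proof.
split.
  move/maxsetP => [hF hmax].
  pose S := side @: F.
  have hS : (#|S| < s)%N by rewrite -indepP.
  have FS : F \subset us S by apply/subsetP => x xF; rewrite inE; apply: imset_f.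
  have eF : us S = F by apply: hmax; rewrite ?us_indep.
  exists S; split => //.
  apply/eqP; rewrite eqn_leq; apply/andP; split; first by rewrite leq_subRL ?add1n // ltnW.
  rewrite leqNgt; apply/negP => hlt.
  have [j jS] : exists j, j \notin S.
    apply/existsP; rewrite -negb_forall; apply/negP => /forallP hall.
    have : S = setT by apply/setP => i; rewrite inE hall.
    move=> eS; move: hS; rewrite eS cardsT card_ord ltnNge Hst //.
  have h1 : independent H (us (j |: S)).
    rewrite us_indep cardsU1 jS add1n.
    by move: hlt; case: s Hs => // s' _; rewrite subn1.
  have h2 : F \subset us (j |: S).
    by rewrite -eF; apply/subsetP => x; rewrite !inE => ->; rewrite orbT.
  have := hmax _ h1 h2; rewrite -eF => e2.
  have e3 : j |: S = S by rewrite -[LHS](side_us (j |: S)) e2 side_us.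
  by move: jS; rewrite -e3 setU11.
move=> [S [hS ->]]; apply/maxsetP; split.
  by rewrite us_indep hS subn1 prednK // ltnW.
move=> B hB hsub.
have e1 : side @: B = S.
  apply/eqP; rewrite eq_sym eqEcard; apply/andP; split.
    by rewrite -{1}(side_us S); apply: imsetS.
  by rewrite hS leq_subRL ?add1n -?indepP // ltnW.
apply/eqP; rewrite eqEsubset hsub andbT; apply/subsetP => x xB.
by rewrite inE -e1; apply: imset_f.
Qed.

Lemma transvC T : transversal H T = independent H (~: T).
Proof.
apply/forall_inP/forall_inP => h e eH; move: (h e eH).
  by rewrite setI_eq0 disjoints_subset.
by rewrite setI_eq0 disjoints_subset.
Qed.

Lemma min_transvP T : min_transversal H T <-> facet_Ind H (~: T).
Proof.
rewrite /min_transversal minmaxset /facet_Ind.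
rewrite (maxset_eq _ (P2 := independent H)) //.
by move=> B /=; rewrite transvC setCK.
Qed.

Lemma card_us S : #|us S| = (\sum_(i in S) #|Vside side i|)%N.
Proof.
rewrite -sum1_card (partition_big side (mem S)) => [|x]; last by rewrite inE.
apply: eq_bigr => i iS; rewrite -sum1_card; apply: eq_bigl => x.
rewrite !inE; case: eqP => [->|]; by rewrite ?iS ?andbF ?andbT.
Qed.
End Comb.
Lemma bigmin_le_seq (I : eqType) (r : seq I) (P : pred I) (F : I -> nat) d x :
  x \in r -> P x -> (\big[minn/d]_(i <- r | P i) F i <= F x)%N.
Proof.
move=> xr Px; elim: r xr => [//|a r IH]; rewrite inE big_cons.
case/orP => [/eqP <-|xr]; first by rewrite Px geq_minl.
case: (P a); last exact: IH xr.
exact: leq_trans (geq_minr _ _) (IH xr).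
Qed.

Lemma bigmin_ge (I : finType) (P : pred I) (F : I -> nat) d m :
  (m <= d)%N -> (forall i, P i -> m <= F i)%N -> (m <= \big[minn/d]_(i | P i) F i)%N.
Proof.
move=> hd hF; elim/big_ind: _ => // x y hx hy; by rewrite leq_min hx hy.
Qed.

Section Num.
Variables (n t s : nat) (side : 'I_n -> 'I_t).
Hypothesis Hs : (2 <= s)%N.
Hypothesis Hst : (s <= t)%N.
Hypothesis Hsurj : forall i : 'I_t, exists x : 'I_n, side x = i.
Hypothesis Hmono : forall i j : 'I_t, (i <= j)%N -> (#|Vside side i| <= #|Vside side j|)%N.
Local Notation H := (cHyp s side).
Local Notation us := (union_sides side).
Local Notation w := (fun i => #|Vside side i|).
Let top := (\sum_(i < t | (t - s + 1 <= i)%N) #|Vside side i|)%N.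
Let bot := (\sum_(i < t | (i < t - s + 1)%N) #|Vside side i|)%N.
Let TopS := [set i : 'I_t | (t - s + 1 <= i)%N].

Lemma eTS : (t - s + 1 = t - (s - 1))%N.
Proof. by move: Hs Hst; clear; lia. Qed.

Lemma card_TopS : #|TopS| = (s - 1)%N.
Proof.
rewrite /TopS eTS card_top //; exact: leq_trans (leq_subr _ _) Hst.
Qed.

Lemma total_split : n = (top + bot)%N.
Proof.
have := card_us side setT.
have -> : us setT = setT by apply/setP => x; rewrite !inE.
rewrite cardsT card_ord => ->; rewrite /top /bot.
rewrite (bigID (fun i : 'I_t => (t - s + 1 <= i)%N)) /=.
congr (_ + _); apply: eq_bigl => i; by rewrite ?inE // ltnNge.
Qed.

Lemma top_bound (S : {set 'I_t}) : #|S| = (s - 1)%N -> (\sum_(i in S) #|Vside side i| <= top)%N.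
Proof.
move=> hS; rewrite /top eTS; apply: top_max => //.
exact: leq_trans (leq_subr _ _) Hst.
Qed.

Lemma card_usTop : #|us TopS| = top.
Proof. by rewrite card_us; apply: eq_bigl => i; rewrite /TopS inE. Qed.

Lemma card_usBot : #|us (~: TopS)| = bot.
Proof. by rewrite card_us; apply: eq_bigl => i; rewrite /TopS !inE -ltnNge. Qed.

Lemma indep_top : indep_num H = top.
Proof.
apply/eqP; rewrite eqn_leq; apply/andP; split.
  apply/bigmax_leqP => A hA.
  have [F hF AF] := maxset_exists hA.
  have [S [hS eF]] := (facetP Hs Hst Hsurj F).1 hF.
  apply: leq_trans (subset_leq_card AF) _.
  by rewrite eF card_us; apply: top_bound.
rewrite -card_usTop; apply: (@leq_bigmax_cond _ (independent H) (fun A => #|A|)).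
by rewrite us_indep // card_TopS subn1 prednK // ltnW.
Qed.

Lemma transv_bot T : transversal H T -> (bot <= #|T|)%N.
Proof.
rewrite transvC => hT.
have h1 : (#|~: T| <= top)%N.
  rewrite -indep_top; exact: (@leq_bigmax_cond _ (independent H) (fun A => #|A|)).
have e := cardsC T; rewrite card_ord in e; have e2 := total_split; lia.
Qed.

Lemma transv_T0 : transversal H (us (~: TopS)).
Proof.
by rewrite transvC -usC setCK us_indep // card_TopS subn1 prednK // ltnW.
Qed.

Lemma transv_num_bot : transv_num H = bot.
Proof.
apply/eqP; rewrite eqn_leq; apply/andP; split.
  rewrite -card_usBot; apply: bigmin_le_seq; [exact: mem_index_enum|exact: transv_T0].
apply: bigmin_ge; last exact: transv_bot.
by rewrite total_split leq_addl.
Qed.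

Lemma min_transv_char T : min_transversal H T <->
  exists S : {set 'I_t}, #|S| = (t - s + 1)%N /\ T = us S.
Proof.
rewrite min_transvP facetP //; split.
  move=> [S [hS eS]]; exists (~: S); split.
    have := cardsC S; rewrite card_ord hS; move: Hs Hst; clear; lia.
  by rewrite usC -eS setCK.
move=> [S [hS ->]]; exists (~: S); split; last by rewrite usC.
have := cardsC S; rewrite card_ord hS; move: Hs Hst; clear; lia.
Qed.
End Num.
Section Bal.
Variables (n t s : nat) (side : 'I_n -> 'I_t).
Hypothesis Hs : (2 <= s)%N.
Hypothesis Hst : (s <= t)%N.
Hypothesis Hsurj : forall i : 'I_t, exists x : 'I_n, side x = i.

Lemma bal_sums m : (forall i : 'I_t, #|Vside side i| = m) ->
  (\sum_(i < t | (t - s + 1 <= i)%N) #|Vside side i|)%N = (m * (s - 1))%N /\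
  (\sum_(i < t | (i < t - s + 1)%N) #|Vside side i|)%N = (m * (t - s + 1))%N.
Proof.
move=> hm; pose TopS := [set i : 'I_t | (t - s + 1 <= i)%N].
have e : (t - s + 1 = t - (s - 1))%N by move: Hs Hst; clear; lia.
have cT : #|TopS| = (s - 1)%N.
  by rewrite /TopS e card_top //; exact: leq_trans (leq_subr _ _) Hst.
have cB : #|~: TopS| = (t - s + 1)%N.
  have := cardsC TopS; rewrite card_ord cT; move: Hs Hst; clear; lia.
split.
  rewrite (eq_bigl (mem TopS)); last by move=> i; rewrite -[mem TopS i]/(i \in TopS) /TopS inE.
  by rewrite (eq_bigr (fun _ => m)) // sum_nat_const cT mulnC.
rewrite (eq_bigl (mem (~: TopS))); last by move=> i; rewrite -[mem (~: TopS) i]/(i \in ~: TopS) /TopS !inE -ltnNge.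
by rewrite (eq_bigr (fun _ => m)) // sum_nat_const cB mulnC.
Qed.
End Bal.

Theorem proposition2p1 (K : fieldType) (n t s : nat) (side : 'I_n -> 'I_t)
  (Hs : (2 <= s)%N) (Hst : (s <= t)%N)
  (Hsurj : forall i : 'I_t, exists x : 'I_n, side x = i)
  (Hmono : forall i j : 'I_t, (i <= j)%N -> (#|Vside side i| <= #|Vside side j|)%N) :
  let H := cHyp s side in
  let V := Vside side in
  (* (a) *)
  (forall F : {set 'I_n}, facet_Ind H F <->
     exists S : {set 'I_t}, #|S| = (s - 1)%N /\ F = union_sides side S) /\
  (* (b) *)
  (forall T : {set 'I_n}, min_transversal H T <->
     exists S : {set 'I_t}, #|S| = (t - s + 1)%N /\ T = union_sides side S) /\
  (* (c) *)
  indep_num H = (\sum_(i < t | (t - s + 1 <= i)%N) #|V i|)%N /\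
  transv_num H = (\sum_(i < t | (i < t - s + 1)%N) #|V i|)%N /\
  (* (d) *)
  krull_dim_quot (@edge_ideal K n H) (\sum_(i < t | (t - s + 1 <= i)%N) #|V i|)%N /\
  ((\sum_(i < t | (t - s + 1 <= i)%N) #|V i|)%N%:Z = dim_Ind H + 1)%R /\
  ideal_height (@edge_ideal K n H) (\sum_(i < t | (i < t - s + 1)%N) #|V i|)%N /\
  (* (e) *)
  (forall m : nat, (1 <= m)%N -> (forall i : 'I_t, #|V i| = m) ->
     ideal_height (@edge_ideal K n H) (m * (t - s + 1))%N /\
     krull_dim_quot (@edge_ideal K n H) (m * (s - 1))%N).
Proof.
move=> H V.
have hind := indep_top Hs Hst Hsurj Hmono.
have htr := transv_num_bot Hs Hst Hsurj Hmono.
have [hkr hht] : krull_dim_quot (@edge_ideal K n H)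
     (n - \sum_(i < t | (i < t - s + 1)%N) #|V i|)%N /\
   ideal_height (@edge_ideal K n H) (\sum_(i < t | (i < t - s + 1)%N) #|V i|)%N.
  apply: alg_main.
    exists (union_sides side (~: [set i : 'I_t | (t - s + 1 <= i)%N])); split.
      exact: transv_T0.
    exact: card_usBot.
  exact: transv_bot.
have etot := @total_split n t s side.
have ekr : (n - \sum_(i < t | (i < t - s + 1)%N) #|V i| =
            \sum_(i < t | (t - s + 1 <= i)%N) #|V i|)%N.
  by rewrite [X in (X - _)%N]etot addnK.
rewrite ekr in hkr.
split; first exact: facetP.
split; first exact: min_transv_char.
split; first exact: hind.
split; first exact: htr.
split; first exact: hkr.
split; first by rewrite /dim_Ind hind subrK.
split; first exact: hht.
move=> m _ hm; have [e1 e2] := bal_sums Hs Hst hm.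
by rewrite -e1 -e2.
Qed.
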